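(* Assume $\delta d_0>2$, let $t=d_0/2$, $\varepsilon_0=\frac{d_0}{2}-\frac1\delta$, and $\gamma=\left(1+\frac ct\right)^{-1}\frac{\delta d_0-1}{d_0-1}\alpha$. Let $G=(L\cup R,E)$ be a $(c,d,\alpha,\delta)$-bipartite expander with $L=[n]$, $C_0\subseteq\mathbb{F}_2^d$ a linear code of minimum distance $d_0$, $x\in\mathbb{F}_2^n$ and $y\in T(G,C_0)$ with $d_H(x,y)\le\gamma n$. Suppose $\mathsf{DeepFlip}(x)$ outputs some $x'\in\mathbb{F}_2^n$ (i.e., not $\perp$). Then $|F(x',y)|\le\frac{d_0-1}{\delta d_0-1}\gamma n$.
   Context: A bipartite graph is $(c,d)$-regular if left degrees are $c$ and right degrees $d$; $N(S)$ is the neighborhood of $S$. A $(c,d,\alpha,\delta)$-bipartite expander ($\alpha,\delta\in(0,1]$) is a $(c,d)$-regular bipartite graph with $|N(S)|\ge\delta c|S|$ for all $S\subseteq L$, $|S|\le\alpha|L|$. Tanner code: $L=[n]$, for each $v\in R$ a fixed ordering of $N(v)$ defines $x_{N(v)}\in\mathbb{F}_2^d$, and $T(G,C_0)=\{x:x_{N(v)}\in C_0\ \forall v\in R\}$. $F(x,y)=\{i\in[n]:x_i\ne y_i\}$; $U(x)=\{v\in R:x_{N(v)}\notin C_0\}$; $d_H$ is Hamming distance. $\mathsf{Decode}(z)$ is the codeword of $C_0$ closest to $z\in\mathbb{F}_2^d$, ties broken lexicographically. $W=\{\frac{i}{cd_0}:i\in\mathbb{Z},0\le i\le cd_0\}$.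 $\mathsf{DeterFlip}(x,q)$: set $p_1=\dots=p_n=0$; for each $v\in R$, let $w_v=\mathsf{Decode}(x_{N(v)})$; if $1\le d_H(w_v,x_{N(v)})<t$, let $i$ be the smallest element of $N(v)$ where $w_v$ and $x_{N(v)}$ differ and increase $p_i$ by $\frac{t-d_H(w_v,x_{N(v)})}{ct}$; then flip every $x_i$ with $p_i=q$ and return the result. $\mathsf{DeepFlip}(x)$: let $\varepsilon=\frac{\varepsilon_0\delta}{2ct^2}$ and $s=\left\lceil\log\left(\frac{\delta d_0-1}{2(d_0-1)}\right)/\log(1-\varepsilon)\right\rceil$; set $k_{\min}=|R|+1$, $x_{\min}=\perp$. For each $(q_1,\dots,q_s)\in(W\setminus\{0\})^s$: set $x^{(0)}=x$ and for $i=1,\dots,s$ set $x^{(i)}=\mathsf{DeterFlip}(x^{(i-1)},q_i)$; if $|U(x^{(i)})|>c\gamma n$ abandon this sequence; otherwise, if $i=s$ and $|U(x^{(s)})|<k_{\min}$, set $k_{\min}=|U(x^{(s)})|$ and $x_{\min}=x^{(s)}$. Return $x_{\min}$. *)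

(* Defs.v *)
From HB Require Import structures.
From mathcomp Require Import all_boot all_order all_algebra.
From mathcomp Require Import reals exp.
Set Implicit Arguments. Unset Strict Implicit. Unset Printing Implicit Defensive.
Import Order.TTheory GRing.Theory Num.Theory.
Local Open Scope ring_scope.

(* Words over F_2 are represented as boolean finite functions. *)
Notation word k := {ffun 'I_k -> bool}.

Definition dH k (x y : word k) : nat := #|[set i | x i != y i]|.

Definition Fset n (x y : word n) : {set 'I_n} := [set i | x i != y i].

(* ---------------- Bipartite graphs ----------------
   L = 'I_n, R = a finite type V.  For each right vertex v, nb v : 'I_d -> 'I_n
   is the fixed ordering of N(v) (injective, so |N(v)| = d). *)
Definition Nv n d V (nb : V -> 'I_d -> 'I_n) (v : V) : {set 'I_n} :=
  [set i | i \in codom (nb v)].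

Definition NS n d (V : finType) (nb : V -> 'I_d -> 'I_n) (S : {set 'I_n}) : {set V} :=
  [set v | [exists j, nb v j \in S]].

Definition cd_regular n d (V : finType) (nb : V -> 'I_d -> 'I_n) (c : nat) : Prop :=
  (forall v, injective (nb v)) /\
  (forall i : 'I_n, #|[set v | i \in Nv nb v]| = c).

Definition bip_expander (R : realType) n d (V : finType) (nb : V -> 'I_d -> 'I_n)
    (c : nat) (alpha delta : R) : Prop :=
  0 < alpha <= 1 /\ 0 < delta <= 1 /\ cd_regular nb c /\
  (forall S : {set 'I_n}, #|S|%:R <= alpha * n%:R ->
     delta * c%:R * #|S|%:R <= #|NS nb S|%:R).

Definition word0 k : word k := [ffun=> false].
Definition wadd k (x y : word k) : word k := [ffun i => x i (+) y i].

Definition linear_code k (C0 : {set word k}) : Prop :=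
  word0 k \in C0 /\ (forall x y, x \in C0 -> y \in C0 -> wadd x y \in C0).

Definition min_dist k (C0 : {set word k}) (d0 : nat) : Prop :=
  (exists x y, [/\ x \in C0, y \in C0, x != y & dH x y = d0]) /\
  (forall x y, x \in C0 -> y \in C0 -> x != y -> (d0 <= dH x y)%N).

Definition local n d V (nb : V -> 'I_d -> 'I_n) (x : word n) (v : V) : word d :=
  [ffun j => x (nb v j)].

Definition tanner n d (V : finType) (nb : V -> 'I_d -> 'I_n) (C0 : {set word d})
  : {set word n} := [set x | [forall v, local nb x v \in C0]].

Definition Uset n d (V : finType) (nb : V -> 'I_d -> 'I_n) (C0 : {set word d})
  (x : word n) : {set V} := [set v | local nb x v \notin C0].

Definition lexlt k (w w' : word k) : bool :=
  [exists i : 'I_k, [&& ~~ w i, w' i &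
     [forall j : 'I_k, (j < i)%N ==> (w j == w' j)]]].

Definition Decode k (C0 : {set word k}) (z : word k) : word k :=
  odflt z [pick w in C0 | [forall w' in C0,
      (dH w z < dH w' z)%N || ((dH w z == dH w' z) && ~~ lexlt w' w)]].

Section Algo.
Variables (R : realType) (n d : nat) (V : finType) (nb : V -> 'I_d -> 'I_n)
          (C0 : {set word d}) (c : nat) (t : R).

Definition wv (x : word n) (v : V) : word d := Decode C0 (local nb x v).
Definition dv (x : word n) (v : V) : nat := dH (wv x v) (local nb x v).

Definition Diff (x : word n) (v : V) : {set 'I_n} :=
  [set i | [exists j, (nb v j == i) && (wv x v j != local nb x v j)]].

Definition contributes (x : word n) (v : V) (i : 'I_n) : bool :=
  [&& (1 <= dv x v)%N, (dv x v)%:R < t, i \in Diff x v &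
      [forall i' in Diff x v, (i <= i')%N]].

Definition pval (x : word n) (i : 'I_n) : R :=
  \sum_(v | contributes x v i) ((t - (dv x v)%:R) / (c%:R * t)).

Definition DeterFlip (x : word n) (q : R) : word n :=
  [ffun i => if pval x i == q then ~~ x i else x i].

End Algo.

Definition inWnz (R : realType) (c d0 : nat) (q : R) : Prop :=
  exists k : nat, (1 <= k <= c * d0)%N /\ q = k%:R / (c * d0)%:R.

Definition s_param (R : realType) (c d0 : nat) (delta t eps0 : R) : nat :=
  let eps := eps0 * delta / (2 * c%:R * t ^+ 2) in
  `| Num.ceil (ln ((delta * d0%:R - 1) / (2 * (d0%:R - 1))) / ln (1 - eps)) |%N.

(* A sequence (q_1..q_s) is not abandoned: every x^(i), i = 1..s, has
   |U(x^(i))| <= c gamma n. *)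
Definition valid_seq (R : realType) n d (V : finType) (nb : V -> 'I_d -> 'I_n)
    (C0 : {set word d}) (c d0 : nat) (t gamma : R) (s : nat) (x : word n)
    (qs : seq R) : Prop :=
  size qs = s /\ (forall q, q \in qs -> inWnz c d0 q) /\
  (forall z, z \in scanl (DeterFlip nb C0 c t) x qs ->
     #|Uset nb C0 z|%:R <= c%:R * gamma * n%:R).

(* DeepFlip(x) outputs x' (not ⊥): x' = x^(s) for some non-abandoned sequence
   whose |U(x^(s))| is minimal among all non-abandoned sequences (this holds
   for whatever enumeration order of (W\{0})^s is used). *)
Definition DeepFlip_outputs (R : realType) n d (V : finType)
    (nb : V -> 'I_d -> 'I_n) (C0 : {set word d}) (c d0 : nat)
    (t gamma : R) (s : nat) (x x' : word n) : Prop :=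
  exists qs, valid_seq nb C0 c d0 t gamma s x qs /\
    x' = foldl (DeterFlip nb C0 c t) x qs /\
    (forall qs', valid_seq nb C0 c d0 t gamma s x qs' ->
       (#|Uset nb C0 x'| <= #|Uset nb C0 (foldl (DeterFlip nb C0 c t) x qs')|)%N).

(* Main.v *)
Require Import Defs.
From HB Require Import structures.
From mathcomp Require Import all_boot all_order all_algebra.
From mathcomp Require Import reals exp.
From mathcomp Require Import ring lra zify.
Import Order.TTheory GRing.Theory Num.Theory.
Set Implicit Arguments. Unset Strict Implicit. Unset Printing Implicit Defensive.
Local Open Scope ring_scope.

Lemma dH_eq0 k (a : word k) : dH a a = 0%N.
Proof. by apply/eqP; rewrite cards_eq0; apply/eqP/setP => i; rewrite !inE eqxx. Qed.
Lemma dH_tri k (a b e : word k) : (dH a e <= dH a b + dH b e)%N.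
Proof.
rewrite /dH; apply: leq_trans (leq_card_setU _ _).
apply: subset_leq_card; apply/subsetP => i; rewrite !inE.
by case: (a i); case: (b i); case: (e i).
Qed.

Lemma wv_in n d (V : finType) (nb : V -> 'I_d -> 'I_n) (C0 : {set word d}) (z : word n) (v : V) :
  (1 <= dv nb C0 z v)%N -> wv nb C0 z v \in C0.
Proof.
rewrite /dv /wv /Decode; case: pickP => [w /andP[]//|_] /=.
by rewrite dH_eq0.
Qed.

Lemma e_eq n d (V : finType) (nb : V -> 'I_d -> 'I_n) (z y : word n) v :
  dH (local nb z v) (local nb y v) = #|[set j | nb v j \in Fset z y]|.
Proof. by apply: eq_card => j; rewrite !inE !ffunE. Qed.

Lemma contrib_far (R : realType) n d (V : finType) (nb : V -> 'I_d -> 'I_n)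
   C0 d0 (z y : word n) v i :
  min_dist C0 d0 -> y \in tanner nb C0 ->
  contributes nb C0 (d0%:R / 2 : R) z v i -> z i = y i ->
  (d0%:R / 2 : R) < #|[set j | nb v j \in Fset z y]|%:R.
Proof.
move=> [_ md] yT /and4P [dv1 dvt iD _] ziyi.
have wC := wv_in dv1.
have lyC : local nb y v \in C0 by move: yT; rewrite inE => /forallP.
have neq : wv nb C0 z v != local nb y v.
  move: iD; rewrite inE => /existsP [j /andP [/eqP nbj wj]].
  apply/negP => /eqP E; move: wj; rewrite E !ffunE nbj ziyi eqxx //.
have := md _ _ wC lyC neq.
have := dH_tri (wv nb C0 z v) (local nb z v) (local nb y v).
rewrite e_eq -/(dv nb C0 z v) => h1 h2.
have : (d0 <= dv nb C0 z v + #|[set j | nb v j \in Fset z y]|)%N by apply: leq_trans h2 h1.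
rewrite -(ler_nat R) natrD => h3.
lra.
Qed.

Lemma card_sum (T : finType) (P : pred T) :
  #|[set x | P x]| = (\sum_x (P x : nat))%N.
Proof.
rewrite -sum1_card big_mkcond /=; apply: eq_bigr => x _.
by rewrite inE; case: (P x).
Qed.

Lemma sum_sub (T : finType) (A : pred T) (f : T -> nat) :
  (\sum_(v in A) f v <= \sum_v f v)%N.
Proof. by rewrite [X in (_ <= X)%N](bigID A) /= leq_addr. Qed.

Lemma sum_e n d (V : finType) (nb : V -> 'I_d -> 'I_n) c (S : {set 'I_n}) :
  cd_regular nb c -> (\sum_v #|[set j | nb v j \in S]| = c * #|S|)%N.
Proof.
case=> inj reg.
have E v : #|[set j | nb v j \in S]| = (\sum_(i in S) (i \in Nv nb v : nat))%N.
  rewrite -(card_imset _ (inj v)).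
  transitivity #|[set i | (i \in S) && (i \in Nv nb v)]|.
    apply: eq_card => i; rewrite !inE; apply/imsetP/andP.
      by case=> j; rewrite inE => jS ->; split => //; apply: codom_f.
    case=> iS /codomP [j ij]; exists j => //; by rewrite inE -ij.
  rewrite card_sum [RHS]big_mkcond /=; apply: eq_bigr => i _.
  by case: (i \in S).
under eq_bigr do rewrite E.
rewrite exchange_big /=.
under eq_bigr => i _ do rewrite -card_sum reg.
by rewrite sum_nat_const mulnC.
Qed.

Lemma wrong_flips (R : realType) n d (V : finType) (nb : V -> 'I_d -> 'I_n)
    C0 c d0 (z y : word n) (q : R) :
  cd_regular nb c -> min_dist C0 d0 -> y \in tanner nb C0 -> q != 0 ->
  (d0%:R / 2 : R) * #|Fset (DeterFlip nb C0 c (d0%:R / 2) z q) y :\: Fset z y|%:R <= c%:R * #|Fset z y|%:R.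
Proof.
move=> reg md yT q0; set t : R := d0%:R / 2.
set S := Fset z y.
set K := [set v | t < #|[set j | nb v j \in S]|%:R].
have WK : (#|Fset (DeterFlip nb C0 c t z q) y :\: S| <= #|K|)%N.
  pose h v := [pick i | contributes nb C0 t z v i].
  have : Some @: (Fset (DeterFlip nb C0 c t z q) y :\: S) \subset h @: K.
    apply/subsetP => _ /imsetP [i iW ->].
    move: iW; rewrite !inE /DeterFlip ffunE.
    move=> /andP [/negPn/eqP ziy]; case: ifP => [/eqP pq _ | _]; last by rewrite ziy eqxx.
    case: (pickP (fun v => contributes nb C0 t z v i)) => [v cv|none]; last first.
      by move: pq q0; rewrite /pval big_pred0 // => <-; rewrite eqxx.
    apply/imsetP; exists v.
      by rewrite inE; exact: (contrib_far md yT cv ziy).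
    rewrite /h; case: pickP => [i' ci' | /(_ i)]; last by rewrite cv.
    congr Some.
    move: cv ci' => /and4P[_ _ iD imin] /and4P[_ _ iD' imin'].
    apply: val_inj; apply/anti_leq/andP; split.
      by move/forall_inP: imin => /(_ _ iD').
    by move/forall_inP: imin' => /(_ _ iD).
  move/subset_leq_card; rewrite card_imset; last exact: Some_inj.
  move=> h1; apply: leq_trans h1 (leq_imset_card _ _).
have KS: t * #|K|%:R <= c%:R * #|S|%:R.
  have -> : t * #|K|%:R = \sum_(v in K) t by rewrite sumr_const mulr_natr.
  rewrite -natrM -(sum_e S reg).
  apply: (@le_trans _ _ (\sum_(v in K) (#|[set j | nb v j \in S]|)%:R)).
    by apply: ler_sum => v; rewrite inE => /ltW.
  rewrite -natr_sum ler_nat; exact: sum_sub.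
apply: le_trans KS; apply: ler_wpM2l; first by rewrite /t; apply: divr_ge0.
by rewrite ler_nat.
Qed.

Lemma expansion (R : realType) n d (V : finType) (nb : V -> 'I_d -> 'I_n) c
   (alpha delta : R) C0 d0 (z y : word n) :
 bip_expander nb c alpha delta -> min_dist C0 d0 -> y \in tanner nb C0 -> (0 < d0)%N ->
 #|Fset z y|%:R <= alpha * n%:R ->
 (delta * d0%:R - 1) * c%:R * #|Fset z y|%:R <= (d0%:R - 1) * #|Uset nb C0 z|%:R.
Proof.
case=> _ [_ [reg ex]] [_ md] yT d0p hS.
set S := Fset z y. set N := NS nb S. set U := Uset nb C0 z.
have h1 := ex S hS.
have key : (d0 * #|N| <= c * #|S| + (d0 - 1) * #|U|)%N.
  rewrite -(sum_e S reg).
  apply: (@leq_trans (\sum_(v in N) (#|[set j | nb v j \in S]| + (d0-1) * (v \in U)))%N).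
    rewrite mulnC -sum_nat_const; apply: leq_sum => v.
    rewrite inE => /existsP [j jS].
    have e1 : (0 < #|[set j | nb v j \in S]|)%N by apply/card_gt0P; exists j; rewrite inE.
    case vU: (v \in U); first by rewrite muln1; lia.
    rewrite muln0 addn0 -e_eq; apply: md.
    - by move: vU; rewrite inE => /negbFE.
    - by move: yT; rewrite inE => /forallP.
    apply/negP => /eqP E; have := congr1 (fun w : word d => w j) E.
    by rewrite !ffunE; move: jS; rewrite inE => /eqP.
  rewrite big_split /= leq_add ?sum_sub // -big_distrr /= leq_mul2l.
  apply/orP; right; apply: leq_trans (sum_sub _ _) _.
  rewrite -card_sum; apply: subset_leq_card; apply/subsetP=> v; by rewrite inE.
move: key; rewrite -(ler_nat R) !natrD !natrM natrB // => key.
have := ler_wpM2l (ler0n R d0) h1.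
nra.
Qed.

Theorem lemma4p5 (R : realType) (n d c d0 : nat) (V : finType)
    (nb : V -> 'I_d -> 'I_n) (alpha delta : R) (C0 : {set word d})
    (x y x' : word n) :
  let t : R := d0%:R / 2 in
  let eps0 : R := d0%:R / 2 - delta^-1 in
  let gamma : R := (1 + c%:R / t)^-1 * ((delta * d0%:R - 1) / (d0%:R - 1)) * alpha in
  let s := s_param c d0 delta t eps0 in
  2 < delta * d0%:R ->
  bip_expander nb c alpha delta ->
  linear_code C0 ->
  min_dist C0 d0 ->
  y \in tanner nb C0 ->
  (dH x y)%:R <= gamma * n%:R ->
  DeepFlip_outputs nb C0 c d0 t gamma s x x' ->
  #|Fset x' y|%:R <= (d0%:R - 1) / (delta * d0%:R - 1) * gamma * n%:R.
Proof.
move=> t eps0 gamma s hdd bexp _ md yT hx [qs [[_ [qsW qsU]] [-> _]]].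
have [/andP[a0 a1] [/andP[dl0 dl1] [reg _]]] := bexp.
have n0 : 0 <= (n%:R : R) by apply: ler0n.
have d00 : 0 <= (d0%:R : R) by apply: ler0n.
have dd : delta * d0%:R <= d0%:R by apply: ler_piMl.
have d0R : 2 < (d0%:R : R) by lra.
have d0p : (0 < d0)%N by rewrite -(ltr0n R); lra.
have tpos : 0 < t by rewrite /t; lra.
have c00 : 0 <= (c%:R : R) by apply: ler0n.
have ct0 : 0 < 1 + c%:R / t by have := divr_ge0 c00 (ltW tpos); lra.
have dm1 : 0 < delta * d0%:R - 1 by lra.
have d1 : 0 < (d0%:R : R) - 1 by lra.
have gam0 : 0 <= gamma.
  rewrite /gamma; apply: mulr_ge0; last exact: ltW.
  apply: mulr_ge0; first by rewrite invr_ge0 ltW.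
  by apply: divr_ge0; apply: ltW.
set B := (d0%:R - 1) / (delta * d0%:R - 1) * gamma * n%:R.
have HB : B * (1 + c%:R / t) = alpha * n%:R.
  rewrite /B /gamma; field.
  by apply/and4P; split; apply: lt0r_neq0; lra.
have base : #|Fset x y|%:R <= B.
  apply: le_trans hx _; rewrite /B -mulrA; apply: ler_peMl; first exact: mulr_ge0.
  by rewrite ler_pdivlMr // mul1r; lra.
have qnz q : q \in qs -> q != 0.
  move/qsW => [k [/andP [k1 kc] ->]].
  have cd : (0 < c * d0)%N by apply: leq_trans kc.
  by rewrite mulf_neq0 // ?invr_eq0 pnatr_eq0 -lt0n.
elim: qs x base qsW qsU qnz {hx} => [|q qs IH] z hz qsW qsU qnz //=.
apply: IH => [|q' hq'|w hw|q' hq']; last by apply: qnz; rewrite inE hq' orbT.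
- set z' := DeterFlip nb C0 c t z q.
  have q0 : q != 0 by apply: qnz; rewrite inE eqxx.
  have hW := @wrong_flips R n d V nb C0 c d0 z y q reg md yT q0.
  have hF : (#|Fset z' y| <= #|Fset z y| + #|Fset z' y :\: Fset z y|)%N.
    rewrite -(cardsID (Fset z y) (Fset z' y)) leq_add2r.
    apply: subset_leq_card; apply: subsetIr.
  move: hF; rewrite -(ler_nat R) natrD => hF.
  have hU : #|Uset nb C0 z'|%:R <= c%:R * gamma * n%:R by apply: qsU; rewrite /= inE eqxx.
  have W0 : 0 <= (#|Fset z' y :\: Fset z y|%:R : R) by apply: ler0n.
  have S0 : 0 <= (#|Fset z y|%:R : R) by apply: ler0n.
  case: (posnP c) => [c0|cp].
    have hW0 : (c%:R : R) * #|Fset z y|%:R = 0 by rewrite c0 mul0r.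
    rewrite hW0 in hW.
    have : (#|Fset z' y :\: Fset z y|%:R : R) <= 0.
      rewrite -(ler_pM2l tpos) mulr0; exact: hW.
    lra.
  have cpR : 0 < (c%:R : R) by rewrite ltr0n.
  have hW' : (#|Fset z' y :\: Fset z y|%:R : R) <= c%:R * B / t.
    rewrite ler_pdivlMr // mulrC; apply: le_trans hW _.
    by apply: ler_wpM2l.
  have hFa : #|Fset z' y|%:R <= alpha * n%:R.
    rewrite -HB; apply: le_trans hF _.
    have -> : B * (1 + c%:R / t) = B + c%:R * B / t by field; lra.
    by apply: lerD.
  have he := @expansion R n d V nb c alpha delta C0 d0 z' y bexp md yT d0p hFa.
  have : (delta * d0%:R - 1) * c%:R * #|Fset z' y|%:R <= (d0%:R - 1) * (c%:R * gamma * n%:R).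
    apply: le_trans he _; apply: ler_wpM2l => //; exact: ltW.
  move=> h2.
  have -> : B = ((d0%:R - 1) * gamma * n%:R) / (delta * d0%:R - 1).
    by rewrite /B; field; apply: lt0r_neq0.
  rewrite ler_pdivlMr //.
  rewrite -(ler_pM2l cpR).
  have e1 : c%:R * (#|Fset z' y|%:R * (delta * d0%:R - 1)) =
            (delta * d0%:R - 1) * c%:R * #|Fset z' y|%:R by ring.
  have e2 : c%:R * ((d0%:R - 1) * gamma * n%:R) =
            (d0%:R - 1) * (c%:R * gamma * n%:R) by ring.
  by rewrite e1 e2.
- by apply: qsW; rewrite inE hq' orbT.
- by apply: qsU; rewrite /= inE hw orbT.
Qed.
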